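(* Let $\mathcal{G}$ be the complete digraph on $n\ge 3$ nodes (all ordered pairs including self-loops are edges) and let $\tau\in\{1,\dots,n-1\}$. Let $\mathbb{V}=\max_P\min_{i,j}\mathbb{P}(T_{ij}(P)\le\tau)$, the maximum over all row-stochastic nonnegative $P\in\mathbb{R}^{n\times n}$. Then the random walk strategy $P=\frac1n\mathbb{1}_n\mathbb{1}_n^\top$ satisfies $$\min_{i,j}\mathbb{P}(T_{ij}(P)\le\tau)\ \ge\ \frac{n^\tau-(n-1)^\tau}{\tau n^{\tau-1}}\,\mathbb{V},\qquad\text{and}\qquad \frac{n^\tau-(n-1)^\tau}{\tau n^{\tau-1}}\ge 1-\frac1e,$$ where $e$ is Euler's number.
   Context: For a Markov chain $(X_k)_{k\ge0}$ with transition matrix $P$, $T_{ij}=\min\{k\ge1: X_k=j\}$ given $X_0=i$. ''Performance within a factor $f$ of optimality'' means the strategy's value is at least $f$ times the optimal value $\mathbb{V}$. *)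

(* Defs.v *)
From HB Require Import structures.
From mathcomp Require Import all_boot all_order all_algebra.
From mathcomp Require Import all_classical all_reals all_analysis.
Set Implicit Arguments. Unset Strict Implicit. Unset Printing Implicit Defensive.
Import Order.TTheory GRing.Theory Num.Theory.
Local Open Scope ring_scope.

Definition stochastic (R : realType) (n : nat) (P : 'M[R]_n) : Prop :=
  (forall i j, 0 <= P i j) /\ (forall i, \sum_(j < n) P i j = 1).

(* nohit P j t i = P(X_1 <> j, ..., X_t <> j | X_0 = i), i.e. P(T_ij > t),
   computed by conditioning on the first step (sum over paths avoiding j). *)
Fixpoint nohit (R : realType) (n : nat) (P : 'M[R]_n) (j : 'I_n) (t : nat)
  (i : 'I_n) : R :=
  match t with
  | O => 1
  | t'.+1 => \sum_(l < n | l != j) P i l * nohit P j t' l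
  end.

(* P(T_ij <= tau) where T_ij = min{k >= 1 : X_k = j}, X_0 = i. *)
Definition hitprob (R : realType) (n : nat) (P : 'M[R]_n) (tau : nat)
  (i j : 'I_n) : R := 1 - nohit P j tau i.

(* min_{i,j} P(T_ij(P) <= tau)  (values are <= 1 for stochastic P, so the
   neutral element 1 of the min is harmless; n >= 1 in our use). *)
Definition minhit (R : realType) (n : nat) (P : 'M[R]_n) (tau : nat) : R :=
  \big[Num.min/1]_(i < n) \big[Num.min/1]_(j < n) hitprob P tau i j.

Definition optval (R : realType) (n : nat) (tau : nat) : R :=
  sup [set minhit P tau | P in [set P : 'M[R]_n | stochastic P]].

Definition rw (R : realType) (n : nat) : 'M[R]_n :=
  \matrix_(i < n, j < n) (n%:R)^-1.

(* Main.v *)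
Require Import Defs.
From HB Require Import structures.
From mathcomp Require Import all_boot all_order all_algebra.
From mathcomp Require Import all_classical all_reals all_analysis.
From mathcomp Require Import ring lra.
Import Order.TTheory GRing.Theory Num.Theory.
Set Implicit Arguments. Unset Strict Implicit.
Local Open Scope ring_scope.

Section S.
Variable R : realType.

Lemma nohit_bnd n (P : 'M[R]_n) (hP : stochastic P) j t i :
  0 <= nohit P j t i <= 1.
Proof.
case: hP => P0 P1.
elim: t i => [|t IH] i /=; first by rewrite ler01 lexx.
apply/andP; split.
  by apply: sumr_ge0 => l _; apply: mulr_ge0 => //; case/andP: (IH l).
rewrite -(P1 i) [X in _ <= X](bigID (fun l => l != j)) /= -[X in X <= _]addr0.
apply: lerD; last by apply: sumr_ge0.
apply: ler_sum => l _; rewrite -[X in _ <= X]mulr1; apply: ler_wpM2l => //.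
by case/andP: (IH l).
Qed.

Lemma sum_hit n (P : 'M[R]_n) (hP : stochastic P) t i :
  \sum_(j < n) (1 - nohit P j t i) <= t%:R.
Proof.
have hb := nohit_bnd hP.
case: hP => P0 P1.
elim: t i => [|t IH] i /=.
  by rewrite big1 // => j _; rewrite subrr.
have E : forall j, 1 - \sum_(l < n | l != j) P i l * nohit P j t l
   = P i j + \sum_(l < n | l != j) P i l * (1 - nohit P j t l).
  move=> j; rewrite -{1}(P1 i) (bigD1 j) //= -addrA; congr (_ + _).
  rewrite -sumrB; apply: eq_bigr => l _; by rewrite mulrBr mulr1.
rewrite (eq_bigr _ (fun j _ => E j)) big_split /= P1 -natr1 addrC lerD2r.
apply: (@le_trans _ _ (\sum_(j < n) \sum_(l < n) P i l * (1 - nohit P j t l))).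
  apply: ler_sum => j _.
  rewrite [X in _ <= X](bigD1 j) //= lerDr; apply: mulr_ge0 => //.
  by rewrite subr_ge0; case/andP: (hb j t j).
rewrite exchange_big /=.
apply: (@le_trans _ _ (\sum_(l < n) P i l * t%:R)).
  apply: ler_sum => l _; rewrite -mulr_sumr; apply: ler_wpM2l => //.
by rewrite -mulr_suml P1 mul1r.
Qed.

Lemma bigmin_le (I : eqType) (s : seq I) (F : I -> R) x :
  x \in s -> \big[Num.min/1]_(i <- s) F i <= F x.
Proof.
elim: s => // a s IH; rewrite in_cons big_cons ge_min.
by case/orP => [/eqP -> | /IH ->]; rewrite ?lexx ?orbT.
Qed.

Lemma bigmin_ge n (F : 'I_n -> R) b :
  b <= 1 -> (forall i, b <= F i) -> b <= \big[Num.min/1]_(i < n) F i.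
Proof.
move=> b1 hF; apply: (big_ind (fun x => b <= x)) => //.
by move=> x y hx hy; rewrite le_min hx hy.
Qed.

Lemma minhit_le n (P : 'M[R]_n) (hP : stochastic P) t :
  (0 < n)%N -> minhit P t <= t%:R / n%:R.
Proof.
move=> n0; set i0 := Ordinal n0.
have h1 : forall j, minhit P t <= hitprob P t i0 j.
  move=> j; apply: le_trans (bigmin_le _ (mem_index_enum j)).
  exact: (bigmin_le _ (mem_index_enum i0)).
have np : 0 < n%:R :> R by rewrite ltr0n.
rewrite ler_pdivlMr //.
have : \sum_(j < n) minhit P t <= t%:R.
  apply: le_trans (sum_hit hP t i0); apply: ler_sum => j _; exact: h1.
by rewrite sumr_const card_ord mulr_natr.
Qed.

Lemma nohit_rw n j t i : (0 < n)%N ->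
  nohit (rw R n) j t i = ((n%:R - 1) / n%:R) ^+ t.
Proof.
move=> n0; elim: t i => [|t IH] i //=.
rewrite (eq_bigr (fun _ => n%:R^-1 * ((n%:R - 1) / n%:R) ^+ t)); last first.
  by move=> l _; rewrite IH mxE.
rewrite sumr_const.
have -> : #|[pred l : 'I_n | l != j]| = n.-1.
  by rewrite -[in RHS](card_ord n) -(cardC1 j); apply: eq_card => l.
rewrite exprS -mulrnAl; congr (_ * _).
rewrite -mulr_natr mulrC; congr (_ * _).
by rewrite -[in RHS](prednK n0) mulrSr addrK.
Qed.


Lemma avg (y : R) t m : 0 <= y -> y <= 1 ->
  t%:R * \sum_(k < t + m) y ^+ k <= (t + m)%:R * \sum_(k < t) y ^+ k.
Proof.
move=> y0 y1; elim: m => [|m IH]; first by rewrite addn0.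
rewrite addnS big_ord_recr /= mulrDr.
rewrite -addn1 natrD mulrDl mul1r.
apply: lerD => //.
apply: (@le_trans _ _ (\sum_(k < t) y ^+ (t + m))).
  by rewrite sumr_const card_ord mulr_natl.
apply: ler_sum => k _; apply: ler_wiXn2l => //.
by apply: leq_trans (ltnW (ltn_ord k)) (leq_addr _ _).
Qed.

Lemma stoch_rw n : (0 < n)%N -> stochastic (rw R n).
Proof.
move=> n0; split => [i j|i]; first by rewrite mxE invr_ge0 ler0n.
rewrite (eq_bigr (fun _ => n%:R^-1)); last by move=> j _; rewrite mxE.
rewrite sumr_const card_ord -[_ *+ n]mulr_natr mulVf //.
by rewrite pnatr_eq0 -lt0n.
Qed.

End S.

Unset Implicit Arguments.
Theorem lemma2 (R : realType) (n tau : nat) (hn : (3 <= n)%N)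
  (htau1 : (1 <= tau)%N) (htau2 : (tau <= n.-1)%N) :
  minhit (rw R n) tau >=
    ((n%:R ^+ tau - (n%:R - 1) ^+ tau) / (tau%:R * n%:R ^+ tau.-1))
      * optval R n tau
  /\ ((n%:R : R) ^+ tau - (n%:R - 1) ^+ tau) / (tau%:R * n%:R ^+ tau.-1)
      >= 1 - (expR (1 : R))^-1.
Proof.
have n0 : (0 < n)%N by apply: leq_trans hn.
set N : R := n%:R.
have N0 : N != 0 by rewrite pnatr_eq0 -lt0n.
have Np : 0 < N by rewrite ltr0n.
set y : R := (N - 1) / N.
have y1N : 1 - y = N^-1 by rewrite /y; field.
have y0 : 0 <= y.
  by rewrite /y divr_ge0 // ?ler0n // subr_ge0 ler1n; apply: leq_trans hn.
have y1 : y <= 1 by rewrite -subr_ge0 y1N invr_ge0 ler0n.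
set S := fun t => \sum_(k < t) y ^+ k.
have S0 : forall t, 0 <= S t by move=> t; apply: sumr_ge0 => k _; exact: exprn_ge0.
have e2 : forall t, 1 - y ^+ t = N^-1 * S t.
  move=> t; rewrite -y1N -opprB subrX1 -mulNr opprB.
  by rewrite /S.
have tau0 : tau%:R != 0 :> R by rewrite pnatr_eq0 -lt0n.
have hc : (N ^+ tau - (N - 1) ^+ tau) / (tau%:R * N ^+ tau.-1) = S tau / tau%:R.
  have e1 : N - 1 = N * y by rewrite /y; field.
  rewrite e1 exprMn -{1}(mulr1 (N ^+ tau)) -mulrBr e2.
  case: tau htau1 htau2 tau0 {e2} => // t _ _ t0 /=.
  rewrite exprS; field.
  by rewrite expf_neq0 // addrC natr1 t0 pnatr_eq0 -lt0n n0.
rewrite hc; split.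
  have hm : 1 - y ^+ tau <= minhit (rw R n) tau.
    have b1 : 1 - y ^+ tau <= 1 by rewrite lerBlDr lerDl exprn_ge0.
    apply: bigmin_ge => // i; apply: bigmin_ge => // j.
    by rewrite /hitprob nohit_rw.
  apply: le_trans hm.
  apply: (@le_trans _ _ (S tau / tau%:R * (tau%:R / N))).
    apply: ler_wpM2l; first by rewrite divr_ge0 ?ler0n.
    apply: ge_sup.
      by exists (minhit (rw R n) tau); exists (rw R n) => //; exact: stoch_rw.
    by move=> _ [P hP <-]; apply: minhit_le.
  rewrite e2 le_eqVlt; apply/orP; left; apply/eqP; field.
  by rewrite tau0 N0.
have ha := avg tau (n - tau) y0 y1.
rewrite subnKC in ha; last by apply: leq_trans htau2 (leq_pred _).
apply: (@le_trans _ _ (S n / N)).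
  rewrite mulrC -e2 lerD2l lerN2.
  have hy : y <= expR (- N^-1).
    have -> : y = 1 + - N^-1 by rewrite -y1N; ring.
    exact: expR_ge1Dx.
  apply: (@le_trans _ _ (expR (- N^-1) ^+ n)).
    by apply: lerXn2r => //; rewrite nnegrE ?expR_ge0.
  rewrite -expRM_natl mulrN mulfV // expRN //.
rewrite ler_pdivrMr //.
have tp : 0 < tau%:R :> R by rewrite ltr0n.
rewrite mulrC mulrA ler_pdivlMr // [X in X <= _]mulrC.
exact ha.
Qed.
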